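(* Suppose $\Lambda_i\in\mathcal H_I$ with $0<\lambda_i^-\le\lambda_i^+<1$ for $i\in[n]$, and $w_1,\dots,w_n$ are continuous and subadditive capacities. Let $$\kappa=\inf_{(A_1,\dots,A_n)\in\Pi_n(\Omega)}\ \min_{i\in[n]}\Big(\frac{w_i(A_i)}{\lambda_i^-}\vee\max_{j\ne i}\frac{w_j(A_j)}{\lambda_j^+}\Big).$$ (i) If $\kappa<1$, then $\Gamma_{\mathbf\Lambda,\mathbf w}(X)=-\infty$ for every $X\in\mathcal X$. (ii) If $\kappa>1$, then $\Gamma_{\mathbf\Lambda,\mathbf w}(X)>-\infty$ for every $X\in\mathcal X$.
   Context: $\mathcal X$: real-valued random variables on $(\Omega,\mathcal F)$. Capacity: monotone $w:\mathcal F\to[0,1]$, $w(\emptyset)=0$, $w(\Omega)=1$; continuous if $w(A_k)\to0$ whenever $A_k\downarrow\emptyset$; subadditive if $w(A\cup B)\le w(A)+w(B)$. $\mathcal H_I$: increasing functions $\mathbb R\to(0,1)$; $\lambda_i^-=\inf_x\Lambda_i(x)$, $\lambda_i^+=\sup_x\Lambda_i(x)$. $\Pi_n(\Omega)$: measurable partitions of $\Omega$ into $n$ sets. $\mathcal A^{\mathbf\Lambda,\mathbf w}_x=\{\bigcup_iA_i: A_i\in\mathcal F, w_i(A_i)\le\Lambda_i(y_i)\ \forall i\text{ for some }(y_i)\in\mathbb R^n,\sum_iy_i=x\}$ and $\Gamma_{\mathbf\Lambda,\mathbf w}(X)=\inf\{x\in\mathbb R:\{X>x\}\in\mathcal A^{\mathbf\Lambda,\mathbf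 w}_x\}$ (the inf-convolution of the $\Lambda_i\mathrm{VaR}^{w_i}$). *)

(* Defs.v *)
From HB Require Import structures.
From mathcomp Require Import all_boot all_order all_algebra.
From mathcomp Require Import all_classical all_reals all_analysis.
Set Implicit Arguments. Unset Strict Implicit. Unset Printing Implicit Defensive.
Import Order.TTheory GRing.Theory Num.Theory.
Import numFieldNormedType.Exports.
Local Open Scope classical_set_scope.
Local Open Scope ring_scope.

Section Defs.
Context {d : measure_display} {Omega : measurableType d} {R : realType}.

(* capacity on the sigma-algebra F (values only matter on measurable sets) *)
Definition capacity (w : set Omega -> R) : Prop :=
  w set0 = 0 /\ w setT = 1 /\
  (forall A, measurable A -> 0 <= w A <= 1) /\
  (forall A B, measurable A -> measurable B -> A `<=` B -> w A <= w B).

Definition cap_continuous (w : set Omega -> R) : Prop :=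
  forall F : nat -> set Omega, (forall k, measurable (F k)) ->
    (forall k, F k.+1 `<=` F k) -> \bigcap_k F k = set0 ->
    (fun k => w (F k)) @ \oo --> (0 : R).

Definition cap_subadditive (w : set Omega -> R) : Prop :=
  forall A B, measurable A -> measurable B -> w (A `|` B) <= w A + w B.

Definition in_HI (L : R -> R) : Prop :=
  {homo L : x y / x <= y} /\ (forall x, 0 < L x < 1).

Definition lam_minus (L : R -> R) : R := inf (range L).
Definition lam_plus (L : R -> R) : R := sup (range L).

Definition is_partition (n : nat) (A : 'I_n -> set Omega) : Prop :=
  (forall i, measurable (A i)) /\
  (forall i j, i != j -> A i `&` A j = set0) /\
  (forall x, exists i, A i x).

Definition Aclass (n : nat) (L : 'I_n -> R -> R) (w : 'I_n -> set Omega -> R)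
  (x : R) (B : set Omega) : Prop :=
  exists A : 'I_n -> set Omega, exists y : 'I_n -> R,
    (forall i, measurable (A i)) /\
    (\sum_(i < n) y i = x) /\
    (forall i, w i (A i) <= L i (y i)) /\
    B = \bigcup_(i in setT) A i.

Definition Gamma (n : nat) (L : 'I_n -> R -> R) (w : 'I_n -> set Omega -> R)
  (X : Omega -> R) : \bar R :=
  ereal_inf [set x%:E | x in [set x : R | Aclass L w x [set om | x < X om]]].

Definition kappa (n : nat) (L : 'I_n -> R -> R) (w : 'I_n -> set Omega -> R)
  : \bar R :=
  ereal_inf [set (\big[Order.min/+oo%E]_(i < n)
                   Order.max ((w i (A i) / lam_minus (L i))%:E)
                     (\big[Order.max/-oo%E]_(j < n | j != i)
                        ((w j (A j) / lam_plus (L j))%:E)))%E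
            | A in [set A : 'I_n -> set Omega | is_partition A]].

End Defs.

(* Main.v *)
Require Import Defs.
From HB Require Import structures.
From mathcomp Require Import all_boot all_order all_algebra.
From mathcomp Require Import all_classical all_reals all_analysis.
Import Order.TTheory GRing.Theory Num.Theory.
Local Open Scope classical_set_scope.
Local Open Scope ring_scope.

From mathcomp Require Import lra.
Lemma finI (n : nat) (D : set 'I_n) : finite_set D.
Proof.
apply: (@sub_finite_set _ D [set` (predT : pred 'I_n)]) => //.
Qed.

Lemma build_partition (d : measure_display) (Omega : measurableType d)
  (n : nat) (A : 'I_n -> set Omega) (i : 'I_n) (E : set Omega) :
  (forall j, measurable (A j)) -> measurable E ->
  (forall om, E om \/ exists j, A j om) ->
  exists P : 'I_n -> set Omega, is_partition P /\
    P i `<=` A i `|` E /\ (forall j, j != i -> P j `<=` A j).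
Proof.
move=> mA mE cov.
pose Q j := A j `&` ~` A i `&` \bigcap_(m in [set m : 'I_n | (m < j)%N]) ~` A m.
have mQ : forall j, measurable (Q j).
  move=> j; apply: measurableI; first exact: measurableI (mA j) (measurableC (mA i)).
  by apply: fin_bigcap_measurable; [exact: finI | move=> m _; exact: measurableC].
have QA : forall j, Q j `<=` A j by move=> j om [[]].
pose P j := if j == i then ~` (\bigcup_(m in [set m | m != i]) Q m) else Q j.
exists P; split; [split; [|split]|split].
- move=> j; rewrite /P; case: eqP => _; last exact: mQ.
  apply: measurableC; apply: fin_bigcup_measurable; first exact: finI.
  by move=> m _; exact: mQ.
- move=> j k jk; apply/seteqP; split => // om [].
  rewrite /P; case: (eqVneq j i) => [ji|ji]; case: (eqVneq k i) => [ki|ki]; rewrite ?ji ?ki ?eqxx.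
  + by move: jk; rewrite ji ki eqxx.
  + by move=> H Qk; apply: H; exists k.
  + by move=> Qj H; apply: H; exists j.
  + move=> Qj Qk.
    have : (nat_of_ord j != nat_of_ord k) by exact: jk.
    rewrite neq_ltn => /orP[] lt.
    * by case: Qk => _ /(_ j lt); apply; exact: QA.
    * by case: Qj => _ /(_ k lt); apply; exact: QA.
- move=> om; case: (pselect (exists2 m, m != i & Q m om)) => [[m mi Qm]|H].
  + by exists m; rewrite /P (negbTE mi).
  + by exists i; rewrite /P eqxx.
- move=> om; rewrite /P eqxx => H.
  case: (pselect (A i om)) => Ai; first by left.
  case: (cov om) => [Eom|[j Aj]]; first by right.
  exfalso; apply: H.
  pose p : pred 'I_n := fun j => `[< A j om >].
  have pj : p j by exact/asboolP.
  case: (arg_minnP (fun j : 'I_n => nat_of_ord j) pj) => m /asboolP Am Hmin.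
  have mi : m != i by apply/eqP => mi; apply: Ai; rewrite -mi.
  exists m => //; split; first by split.
  move=> k /= km Ak; have := Hmin k (asboolT Ak).
  by rewrite leqNgt km.
- by move=> j /negbTE ji; rewrite /P ji.
Qed.
Section S.
Context (d : measure_display) (Omega : measurableType d) (R : realType).

Lemma mgt (X : Omega -> R) (x : R) : measurable_fun setT X ->
  measurable [set om | x < X om].
Proof.
move=> mX; rewrite (_ : [set om | x < X om] = setT `&` X @^-1` `]x, +oo[).
  exact: mX.
by apply/seteqP; split => om /=; rewrite in_itv /= ?andbT // => -[].
Qed.

Lemma mle (X : Omega -> R) (x : R) : measurable_fun setT X ->
  measurable [set om | X om <= x].
Proof.
move=> mX; rewrite (_ : [set om | X om <= x] = setT `&` X @^-1` `]-oo, x]).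
  exact: mX.
by apply/seteqP; split => om /=; rewrite in_itv /= // => -[].
Qed.

Lemma lam_lb (L : R -> R) : in_HI L -> forall t, lam_minus L <= L t.
Proof.
move=> [_ HL] t; apply: inf_lbound; last by exists t.
exists 0 => _ [s _ <-]; have /andP[h _] := HL s; exact: ltW.
Qed.

Lemma lam_ub (L : R -> R) : in_HI L -> forall t, L t <= lam_plus L.
Proof.
move=> [_ HL] t; apply: sup_ubound; last by exists t.
exists 1 => _ [s _ <-]; have /andP[_ h] := HL s; exact: ltW.
Qed.

Lemma Gamma_noo n (L : 'I_n -> R -> R) (w : 'I_n -> set Omega -> R) (X : Omega -> R) :
  (forall x : R, Aclass L w x [set om | x < X om]) -> Gamma L w X = -oo%E.
Proof.
move=> H.
have G : forall x : R, (Gamma L w X <= x%:E)%E.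
  by move=> x; apply: ereal_inf_lbound; exists x => //; exact: H.
case E: (Gamma L w X) => [r| |] //.
  by have := G (r - 1)%R; rewrite E lee_fin => h; exfalso; clear E G H; lra.
by have := G 0; rewrite E.
Qed.

End S.
Lemma part1 (d : measure_display) (Omega : measurableType d)
  (R : realType) (n : nat) (L : 'I_n -> R -> R)
  (w : 'I_n -> set Omega -> R) :
  (forall i, in_HI (L i)) ->
  (forall i, 0 < lam_minus (L i) /\ lam_minus (L i) <= lam_plus (L i)
             /\ lam_plus (L i) < 1) ->
  (forall i, capacity (w i)) ->
  (kappa L w < 1%E)%E ->
     forall X : Omega -> R, measurable_fun setT X -> Gamma L w X = -oo%E.
Proof.
move=> HL Hlam Hw Hk X mX.
have [_ [A [mA [disj cov]] <-] Hlt] := ereal_inf_lt Hk.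
move/bigmin_ltP: Hlt => [//|[i _]].
rewrite gt_max => /andP[Hi Hj].
have wi : w i (A i) < lam_minus (L i).
  by move: Hi; rewrite lte_fin ltr_pdivrMr ?mul1r //; case: (Hlam i).
have wj : forall j, j != i -> w j (A j) < lam_plus (L j).
  move=> j ji; have : ((w j (A j) / lam_plus (L j))%:E < 1)%E.
    apply: le_lt_trans _ Hj. exact: le_bigmax_cond.
  case: (Hlam j) => h [h1 _].
  by rewrite lte_fin ltr_pdivrMr ?mul1r //; apply: lt_le_trans h1.
have [y0 Hy0] : exists y0 : 'I_n -> R, forall j, j != i -> w j (A j) <= L j (y0 j).
  have : forall j, exists t, j != i -> w j (A j) <= L j t.
    move=> j; case: (eqVneq j i) => [_|ji]; first by exists 0.
    have [_ [t _ <-] ht] := @sup_gt _ (range (L j)) (w j (A j)) (ex_intro _ (L j 0) (ex_intro2 _ _ 0 I erefl)) (wj j ji).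
    by exists t => _; exact: ltW.
  by move=> /choice [f Hf]; exists f.
apply: Gamma_noo => x.
pose y j := if j == i then x - \sum_(k < n | k != i) y0 k else y0 j.
exists (fun j => A j `&` [set om | x < X om]), y; split; [|split; [|split]].
- by move=> j; apply: measurableI; [exact: mA | exact: mgt].
- rewrite (bigD1 i) //= /y eqxx; rewrite (eq_bigr y0); first by rewrite subrK.
  by move=> j /negbTE ->.
- move=> j; case: (Hw j) => _ [_ [_ mono]].
  have mAx : measurable (A j `&` [set om | x < X om]).
    by apply: measurableI; [exact: mA | exact: mgt].
  have h := mono _ _ mAx (mA j) (@subIsetl _ (A j) [set om | x < X om]).
  apply: le_trans h _.
  rewrite /y; case: (eqVneq j i) => [ji|ji]; last exact: Hy0.
  rewrite ji; exact: le_trans (ltW wi) (@lam_lb _ _ (HL i) _).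
- apply/seteqP; split => om.
  + move=> xo; have [j Aj] := cov om; by exists j.
  + by move=> [j _ []].
Qed.
Lemma claim2 (d : measure_display) (Omega : measurableType d)
  (R : realType) (n : nat) (L : 'I_n -> R -> R)
  (w : 'I_n -> set Omega -> R) :
  (0 < n)%N ->
  (forall i, in_HI (L i)) ->
  (forall i, 0 < lam_minus (L i) /\ lam_minus (L i) <= lam_plus (L i)
             /\ lam_plus (L i) < 1) ->
  (forall i, capacity (w i) /\ cap_continuous (w i) /\ cap_subadditive (w i)) ->
  forall X : Omega -> R, measurable_fun setT X -> Gamma L w X = -oo%E ->
  forall r : R, 1 < r -> (kappa L w <= r%:E)%E.
Proof.
move=> Hn HL Hlam Hw X mX HG r r1.
pose eps i := (r - 1) * lam_minus (L i) / 2.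
have eps_gt0 : forall i, 0 < eps i.
  move=> i; rewrite /eps; case: (Hlam i) => h _.
  by apply: divr_gt0 => //; apply: mulr_gt0 => //; rewrite subr_gt0.
pose D (k : nat) := [set om | X om <= - (k%:R)].
have mD : forall k, measurable (D k) by move=> k; exact: mle.
have Hev : \forall k \near \oo, forall i, w i (D k) < eps i /\
    L i (- k%:R) < lam_minus (L i) + eps i.
  apply: filter_forall => i.
  have h1 : \forall k \near \oo, w i (D k) < eps i.
    apply: (cvgr_lt 0 _ _ (eps_gt0 i)).
    case: (Hw i) => _ [Hc _]; apply: Hc => //.
      move=> k om /=; rewrite /D /= => h; apply: le_trans h _.
      by rewrite lerN2 ler_nat.
    apply/seteqP; split => // om /= H.
    have hb := archi_boundP (normr_ge0 (X om)).
    have := H (Num.bound `|X om|) I; rewrite /D /= => h.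
    have := ler_norm (- X om); rewrite normrN => h2.
    exfalso; clear -hb h h2; lra.
  have h2 : \forall k \near \oo, L i (- k%:R) < lam_minus (L i) + eps i.
    have [_ [t _ <-] ht] := @inf_lt _ (range (L i)) (lam_minus (L i) + eps i)
      (ex_intro _ (L i 0) (ex_intro2 _ _ 0 I erefl))
      (ltr_pwDr (eps_gt0 i) (lexx _)).
    exists (Num.bound `|t|) => // k /= Hk.
    apply: le_lt_trans ht; case: (HL i) => mono _; apply: mono.
    have hb := archi_boundP (normr_ge0 t).
    have := ler_norm (- t); rewrite normrN => h3.
    have h4 : (Num.bound `|t|)%:R <= k%:R :> R by rewrite ler_nat.
    clear -hb h3 h4; lra.
  by apply: filterS2 h1 h2 => k a b; split.
have [K _ HK] := Hev; have {Hev} HK := HK K (leqnn K).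
have [_ [x Vx <-] xlt] := lb_ereal_infNy_adherent (n%:R * - K%:R) HG.
rewrite lte_fin in xlt.
case: Vx => A [y [mA [sy [wy Beq]]]].
have n1 : 1 <= n%:R :> R by rewrite ler1n.
have K0 : 0 <= K%:R :> R by [].
have [i yi] : exists i, y i <= x / n%:R.
  case: (pselect (exists i, y i <= x / n%:R)) => // H; exfalso.
  have H' : forall i, x / n%:R < y i.
    by move=> i; rewrite ltNge; apply/negP => h; apply: H; exists i.
  have : \sum_(i < n) (x / n%:R) < \sum_(i < n) y i.
    apply: ltr_sum => //; apply/hasP; exists (Ordinal Hn) => //.
  have nz : n%:R != 0 :> R by rewrite pnatr_eq0 -lt0n.
  by rewrite sy sumr_const card_ord -[_ *+ n]mulr_natr divfK // ltxx.
have yK : y i <= - K%:R.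
  apply: le_trans yi _; rewrite ler_pdivrMr; last by clear -n1; lra.
  rewrite mulrC; exact: ltW.
pose E := [set om | X om <= x].
have mE : measurable E by exact: mle.
have cov : forall om, E om \/ exists j, A j om.
  move=> om; case: (leP (X om) x) => h; first by left.
  right; have : [set om | x < X om] om by [].
  by rewrite Beq => -[j _ Aj]; exists j.
have [P [[mP [disj covP]] [Pi Pj]]] := @build_partition _ _ _ _ i _ mA mE cov.
have ED : E `<=` D K.
  move=> om; rewrite /E /D /= => h.
  have h2 : n%:R * - K%:R <= - K%:R :> R by clear -n1 K0; nra.
  clear -h h2 xlt; lra.
apply: le_trans; first by apply: ereal_inf_lbound; exists P.
apply: le_trans; first exact: (bigmin_le _ i).
rewrite ge_max; apply/andP; split.
- case: (Hlam i) => lm _.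
  rewrite lee_fin ler_pdivrMr //.
  case: (Hw i) => [[_ [_ [_ mono]]] [_ sub]].
  have mAD : measurable (A i `|` D K) by apply: measurableU.
  have h1 : w i (P i) <= w i (A i `|` D K).
    apply: mono => //; apply: subset_trans Pi _.
    by apply: setUS.
  have h2 := sub _ _ (mA i) (mD K).
  have h3 : L i (y i) <= L i (- K%:R) by case: (HL i) => m _; exact: m.
  have h4 := wy i.
  have [h5 h6] := HK i.
  rewrite /eps in h5 h6.
  clear -h1 h2 h3 h4 h5 h6 lm r1; nra.
- apply: bigmax_le; first exact: leNye. move=> j ji.
  case: (Hlam j) => lm [lmp lp].
  rewrite lee_fin ler_pdivrMr; last by clear -lm lmp; lra.
  case: (Hw j) => [[_ [_ [_ mono]]] _].
  have h1 : w j (P j) <= w j (A j) by apply: mono => //; exact: Pj.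
  have h2 := wy j.
  have h3 := @lam_ub _ _ (HL j) (y j).
  clear -h1 h2 h3 lm lmp r1; nra.
Qed.

Theorem mainTheorem13 (d : measure_display) (Omega : measurableType d)
  (R : realType) (n : nat) (L : 'I_n -> R -> R)
  (w : 'I_n -> set Omega -> R) :
  (0 < n)%N ->
  (forall i, in_HI (L i)) ->
  (forall i, 0 < lam_minus (L i) /\ lam_minus (L i) <= lam_plus (L i)
             /\ lam_plus (L i) < 1) ->
  (forall i, capacity (w i) /\ cap_continuous (w i) /\ cap_subadditive (w i)) ->
  ((kappa L w < 1%E)%E ->
     forall X : Omega -> R, measurable_fun setT X -> Gamma L w X = -oo%E) /\
  ((1%E < kappa L w)%E ->
     forall X : Omega -> R, measurable_fun setT X -> (-oo < Gamma L w X)%E).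
Proof.
move=> Hn HL Hlam Hw; split.
- by apply: part1 => // i; case: (Hw i).
- move=> Hk X mX; rewrite ltNye; apply/eqP => HG.
  have C := @claim2 _ _ _ _ L w Hn HL Hlam Hw X mX HG.
  case Ek : (kappa L w) => [s| |]; rewrite Ek in Hk C => //.
  + rewrite lte_fin in Hk.
    have h := C ((1 + s) / 2) ltac:(clear -Hk; lra).
    rewrite lee_fin in h; clear -Hk h; lra.
  + by have := C 2 ltac:(clear; lra).
Qed.
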